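(* Let $m\ge d\ge1$, $\lambda=d/m$, $p$ a polynomial of degree $d$ with nonnegative real roots and largest root $R$, and define on $\{(x,y):x,y>\sqrt R\}$ \[ F(x,y)=-\frac1{\sqrt{md}}\log\big[y^{m-d}p(xy)\big]. \] Then $F$ is convex, and for every $z>\sqrt R$, $\partial_xF(z,z)\,\partial_yF(z,z)=\mathcal H(z)$, where $\mathcal H(z)=\mathcal G(z)\big(\lambda\mathcal G(z)+\frac{1-\lambda}{z}\big)$ and $\mathcal G(z)=\frac1d\frac{zp'(z^2)}{p(z^2)}$.
   Context: $p(xy)>0$ when $x,y>\sqrt R$ (for $p$ with positive leading coefficient), so $F$ is well defined there. *)

(* Defs.v *)
From HB Require Import structures.
From mathcomp Require Import all_boot all_order all_algebra.
From mathcomp Require Import all_classical all_reals all_analysis.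
Set Implicit Arguments. Unset Strict Implicit. Unset Printing Implicit Defensive.
Import Order.TTheory GRing.Theory Num.Theory.
Local Open Scope ring_scope.

Definition Ffun (R : realType) (m d : nat) (p : {poly R}) (x y : R) : R :=
  - (Num.sqrt (m * d)%:R)^-1 * ln (y ^+ (m - d) * p.[x * y]).

Definition Gfun (R : realType) (d : nat) (p : {poly R}) (z : R) : R :=
  (d%:R)^-1 * (z * (p^`()).[z ^+ 2] / p.[z ^+ 2]).

Definition Hfun (R : realType) (m d : nat) (p : {poly R}) (z : R) : R :=
  let lam := d%:R / m%:R in
  Gfun d p z * (lam * Gfun d p z + (1 - lam) / z).

Definition Fdom (R : realType) (R0 : R) : set (R * R)%type :=
  [set xy | Num.sqrt R0 < xy.1 /\ Num.sqrt R0 < xy.2].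

(* Main.v *)
Require Import Defs.
From HB Require Import structures.
From mathcomp Require Import all_boot all_order all_algebra.
From mathcomp Require Import all_classical all_reals all_analysis.
From mathcomp Require Import ring lra.
Import Order.TTheory GRing.Theory Num.Theory.
Local Open Scope ring_scope.

Lemma keyD (R : realType) (x0 y0 x1 y1 r : R) : 0 <= r -> r <= x0 * y0 ->
  0 <= (x0 * y1 - x1 * y0) ^+ 2 + 4 * r * ((x0 - x1) * (y0 - y1)).
Proof.
move=> r0 rc.
have [k0|k0] := lerP 0 ((x0 - x1) * (y0 - y1)).
  by apply: addr_ge0; [exact: sqr_ge0| apply: mulr_ge0 => //; apply: mulr_ge0].
have E : (x0 * y1 - x1 * y0) ^+ 2 + 4 * r * ((x0 - x1) * (y0 - y1)) =
  (x0 * y1 + x1 * y0 - 2 * (x0 * y0)) ^+ 2 + 4 * (x0 * y0 - r) * (- ((x0 - x1) * (y0 - y1))) by ring.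
rewrite E; apply: addr_ge0; first exact: sqr_ge0.
apply: mulr_ge0; last by rewrite oppr_ge0 ltW.
by apply: mulr_ge0 => //; rewrite subr_ge0.
Qed.

Lemma keyA (R : realType) (x0 y0 x1 y1 r : R) : 0 <= r -> r < x0 * y0 -> r < x1 * y1 ->
  0 < x0 -> 0 < y0 -> 0 < x1 -> 0 < y1 ->
  0 <= x0 * y1 + x1 * y0 - 2 * r.
Proof.
move=> r0 rc re *.
have h1 : r * r <= (x0 * y0) * (x1 * y1) by apply: ler_pM => //; apply: ltW.
have h2 : 0 <= (x0 * y1 - x1 * y0) ^+ 2 := sqr_ge0 _.
have ha : 0 < x0 * y1 by apply: mulr_gt0.
have hb : 0 < x1 * y0 by apply: mulr_gt0.
nra.
Qed.

Lemma keyQ (R : realType) (x0 y0 x1 y1 r t : R) : 0 <= r -> r < x0 * y0 -> r < x1 * y1 ->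
  0 < x0 -> 0 < y0 -> 0 < x1 -> 0 < y1 -> 0 <= t -> t <= 1 ->
  (t * Num.sqrt (x0 * y0 - r) + (1 - t) * Num.sqrt (x1 * y1 - r)) ^+ 2 <=
  (t * x0 + (1 - t) * x1) * (t * y0 + (1 - t) * y1) - r.
Proof.
move=> r0 rc re hx0 hy0 hx1 hy1 t0 t1.
set s0 := Num.sqrt _; set s1 := Num.sqrt _.
have e0 : s0 ^+ 2 = x0 * y0 - r by rewrite sqr_sqrtr // subr_ge0 ltW.
have e1 : s1 ^+ 2 = x1 * y1 - r by rewrite sqr_sqrtr // subr_ge0 ltW.
have g0 : 0 <= s0 := sqrtr_ge0 _.
have g1 : 0 <= s1 := sqrtr_ge0 _.
have hA := @keyA R x0 y0 x1 y1 r r0 rc re hx0 hy0 hx1 hy1.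
have hD := @keyD R x0 y0 x1 y1 r r0 (ltW rc).
set A := x0 * y1 + x1 * y0 - 2 * r.
have hAs : (2 * s0 * s1) ^+ 2 <= A ^+ 2.
  have -> : (2 * s0 * s1) ^+ 2 = 4 * s0 ^+ 2 * s1 ^+ 2 by ring.
  rewrite e0 e1 -subr_ge0.
  have -> : A ^+ 2 - 4 * (x0 * y0 - r) * (x1 * y1 - r) =
     (x0 * y1 - x1 * y0) ^+ 2 + 4 * r * ((x0 - x1) * (y0 - y1)) by rewrite /A; ring.
  exact: hD.
have hA2 : 2 * s0 * s1 <= A.
  by rewrite -(ler_pXn2r (n:=2)) // ?nnegrE // mulr_ge0 // mulr_ge0.
have E : (t * x0 + (1 - t) * x1) * (t * y0 + (1 - t) * y1) - r
   - (t * s0 + (1 - t) * s1) ^+ 2 = t * (1 - t) * (A - 2 * s0 * s1).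
  have -> : (t * s0 + (1 - t) * s1) ^+ 2 = t^+2 * s0 ^+ 2 + (1-t)^+2 * s1^+2 + 2 * t * (1 - t) * s0 * s1 by ring.
  rewrite e0 e1 /A; ring.
rewrite -subr_ge0 E; apply: mulr_ge0; first by apply: mulr_ge0 => //; rewrite subr_ge0.
by rewrite subr_ge0.
Qed.
Lemma keyL (R : realType) (x0 y0 x1 y1 r : R) (t : {i01 R}) : 0 <= r -> r < x0 * y0 -> r < x1 * y1 ->
  0 < x0 -> 0 < y0 -> 0 < x1 -> 0 < y1 ->
  t%:inum * ln (x0 * y0 - r) + (1 - t%:inum) * ln (x1 * y1 - r) <=
  ln ((t%:inum * x0 + (1 - t%:inum) * x1) * (t%:inum * y0 + (1 - t%:inum) * y1) - r).
Proof.
move=> r0 rc re hx0 hy0 hx1 hy1.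
have t0 : 0 <= t%:inum by [].
have t1 : t%:inum <= 1 by [].
have hQ := @keyQ R x0 y0 x1 y1 r t%:inum r0 rc re hx0 hy0 hx1 hy1 t0 t1.
have q0 : 0 < x0 * y0 - r by rewrite subr_gt0.
have q1 : 0 < x1 * y1 - r by rewrite subr_gt0.
have s0 : 0 < Num.sqrt (x0 * y0 - r) by rewrite sqrtr_gt0.
have s1 : 0 < Num.sqrt (x1 * y1 - r) by rewrite sqrtr_gt0.
have hc := @concave_ln R t _ _ s0 s1.
rewrite !convRE in hc.
have pos : 0 < t%:inum * Num.sqrt (x0 * y0 - r) + (1 - t%:inum) * Num.sqrt (x1 * y1 - r).
  by have := @convR_gt0 R _ _ t s0 s1; rewrite convRE.
have L0 : ln (x0 * y0 - r) = ln (Num.sqrt (x0 * y0 - r)) *+ 2.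
  by rewrite -lnXn // sqr_sqrtr // ltW.
have L1 : ln (x1 * y1 - r) = ln (Num.sqrt (x1 * y1 - r)) *+ 2.
  by rewrite -lnXn // sqr_sqrtr // ltW.
apply: (le_trans _ (_ : ln ((t%:inum * Num.sqrt (x0 * y0 - r) + (1 - t%:inum) * Num.sqrt (x1 * y1 - r)) ^+ 2) <= _)).
  rewrite lnXn // L0 L1 !mulr2n.
  have hc' : t%:inum * ln (Num.sqrt (x0 * y0 - r)) + (1 - t%:inum) * ln (Num.sqrt (x1 * y1 - r))
    <= ln (t%:inum * Num.sqrt (x0 * y0 - r) + (1 - t%:inum) * Num.sqrt (x1 * y1 - r)) := hc.
  lra.
rewrite ler_ln // ?posrE ?exprn_gt0 //.
exact: lt_le_trans (exprn_gt0 _ pos) hQ.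
Qed.
Lemma der_lnpoly (R : realType) (q : {poly R}) (k x : R) : 0 < q.[x] ->
  is_derive x 1 (fun y => k * ln q.[y]) (k * (q^`().[x] / q.[x])).
Proof.
move=> hq.
have h := is_derive1_comp (is_derive1_ln hq) (is_derive_poly q x).
have h2 := is_deriveM (is_derive_cst k x 1) h.
have -> : (fun y => k * ln q.[y]) = (cst k * (@ln R \o horner q)) by apply/funext.
eapply trigger_derive; first exact: h2.
rewrite /= scaler0 addr0 /GRing.scale /=; ring.
Qed.

Theorem mainTheorem17 (R : realType) (m d : nat) (p : {poly R}) (R0 : R) :
  (1 <= d)%N -> (d <= m)%N ->
  size p = d.+1 ->
  0 < lead_coef p ->
  (exists rs : seq R, size rs = d /\ all (fun r => 0 <= r) rs /\
     p = lead_coef p *: \prod_(r <- rs) ('X - r%:P)) ->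
  root p R0 -> (forall r : R, root p r -> r <= R0) ->
  convex_function (Fdom R0) (fun xy : (R * R)%type => Ffun m d p xy.1 xy.2)
  /\ (forall z : R, Num.sqrt R0 < z ->
        exists a b : R,
          is_derive z 1 (fun x : R => Ffun m d p x z) a /\
          is_derive z 1 (fun y : R => Ffun m d p z y) b /\
          a * b = Hfun m d p z).
Proof.
move=> d1 dm sp lc [rs [srs [rs0 pE]]] rR0 rmax.
have lc0 : lead_coef p != 0 by rewrite gt_eqF.
have rsge0 : forall r, r \in rs -> 0 <= r by move=> r hr; exact: (allP rs0 r hr).
have rsle : forall r, r \in rs -> r <= R0.
  by move=> r hr; apply: rmax; rewrite pE rootZ // root_prod_XsubC.
have R0ge0 : 0 <= R0.
  move: srs rsge0 rsle; clear pE rs0; case: rs => [|r rs'] /= srs' hge hle; first by rewrite -srs' in d1.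
  exact: le_trans (hge r (mem_head _ _)) (hle r (mem_head _ _)).
have peval : forall w, p.[w] = lead_coef p * \prod_(r <- rs) (w - r).
  move=> w; rewrite {1}pE hornerZ horner_prod; congr (_ * _).
  by apply: eq_bigr => r _; exact: hornerXsubC.
have prodpos : forall w, R0 < w -> forall r, r \in rs -> 0 < w - r.
  by move=> w hw r hr; rewrite subr_gt0; exact: le_lt_trans (rsle r hr) hw.
have ppos : forall w, R0 < w -> 0 < p.[w].
  move=> w hw; rewrite peval mulr_gt0 // big_seq prodr_gt0 // => r hr; exact: prodpos.
have lnprod : forall (s : seq R) w, (forall r, r \in s -> 0 < w - r) ->
    ln (\prod_(r <- s) (w - r)) = \sum_(r <- s) ln (w - r).
  move=> s w; elim: s => [|a s IH] h; first by rewrite !big_nil ln1.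
  have ha : 0 < w - a by apply: h; exact: mem_head.
  have hs : forall r, r \in s -> 0 < w - r by move=> r hr; apply: h; rewrite in_cons hr orbT.
  have hp : 0 < \prod_(r <- s) (w - r) by rewrite big_seq prodr_gt0.
  by rewrite !big_cons lnM ?posrE // IH.
have sqrtsq : forall x y, Num.sqrt R0 < x -> Num.sqrt R0 < y -> R0 < x * y.
  move=> x y hx hy.
  have s0 := sqrtr_ge0 R0. have s2 : Num.sqrt R0 ^+ 2 = R0 by rewrite sqr_sqrtr.
  nra.
have spos : forall x, Num.sqrt R0 < x -> 0 < x by move=> x; apply: le_lt_trans; exact: sqrtr_ge0.
pose n := (m - d)%N.
pose c : R := (Num.sqrt (m * d)%:R)^-1.
have c0 : 0 < c.
  rewrite invr_gt0 sqrtr_gt0 ltr0n muln_gt0; apply/andP; split => //.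
  exact: leq_trans d1 dm.
have Flog : forall x y, Num.sqrt R0 < x -> Num.sqrt R0 < y -> Ffun m d p x y =
    - c * (n%:R * ln y + (ln (lead_coef p) + \sum_(r <- rs) ln (x * y - r))).
  move=> x y hx hy; rewrite /Ffun -/c -/n.
  have hxy := sqrtsq x y hx hy.
  have hy0 := spos y hy.
  have hpr : 0 < \prod_(r <- rs) (x * y - r).
    by rewrite big_seq prodr_gt0 // => r hr; exact: prodpos.
  rewrite lnM ?posrE ?exprn_gt0 ?ppos // lnXn // peval lnM ?posrE // lnprod //.
  by rewrite mulr_natl.
  by move=> r hr; exact: prodpos.
split.
  move=> t [x0 y0] [x1 y1]; rewrite !inE /Fdom /= => -[h0 h1] [h2 h3].
  rewrite convRE /=.
  have T0 : 0 <= t%:num by []. have T1 : t%:num <= 1 by [].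
  set T := t%:num in T0 T1 *.
  have -> : T *: x0 + unstable.onem T *: x1 = T * x0 + (1 - T) * x1 by [].
  have -> : T *: y0 + unstable.onem T *: y1 = T * y0 + (1 - T) * y1 by [].
  have -> : unstable.onem T = 1 - T by [].
  have hxt : Num.sqrt R0 < T * x0 + (1 - T) * x1.
    have := @convR_gt0 R (x0 - Num.sqrt R0) (x1 - Num.sqrt R0) t.
    rewrite !subr_gt0 => /(_ h0 h2); rewrite convRE -/T => H.
    have H' : 0 < T * (x0 - Num.sqrt R0) + (1 - T) * (x1 - Num.sqrt R0) := H.
    lra.
  have hyt : Num.sqrt R0 < T * y0 + (1 - T) * y1.
    have := @convR_gt0 R (y0 - Num.sqrt R0) (y1 - Num.sqrt R0) t.
    rewrite !subr_gt0 => /(_ h1 h3); rewrite convRE -/T => H.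
    have H' : 0 < T * (y0 - Num.sqrt R0) + (1 - T) * (y1 - Num.sqrt R0) := H.
    lra.
  rewrite !Flog //.
  have Hy : T * ln y0 + (1 - T) * ln y1 <= ln (T * y0 + (1 - T) * y1).
    by have := @concave_ln R t y0 y1 (spos _ h1) (spos _ h3); rewrite !convRE.
  have Hs : \sum_(r <- rs) (T * ln (x0 * y0 - r) + (1 - T) * ln (x1 * y1 - r)) <=
            \sum_(r <- rs) ln ((T * x0 + (1 - T) * x1) * (T * y0 + (1 - T) * y1) - r).
    rewrite big_seq [X in _ <= X]big_seq; apply: ler_sum => r hr.
    apply: keyL; [exact: rsge0| | |exact: spos|exact: spos|exact: spos|exact: spos].
      exact: le_lt_trans (rsle r hr) (sqrtsq _ _ h0 h1).
    exact: le_lt_trans (rsle r hr) (sqrtsq _ _ h2 h3).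
  rewrite big_split /= -!mulr_sumr in Hs.
  set S0 := \sum_(r <- rs) ln (x0 * y0 - r) in Hs *.
  set S1 := \sum_(r <- rs) ln (x1 * y1 - r) in Hs *.
  set St := \sum_(r <- rs) _ in Hs *.
  set Y := ln (T * y0 + (1 - T) * y1) in Hy *.
  set K := ln (lead_coef p).
  have Hn := ler_wpM2l (ler0n R n) Hy.
  have key : T * (n%:R * ln y0 + (K + S0)) + (1 - T) * (n%:R * ln y1 + (K + S1))
       <= n%:R * Y + (K + St).
    have -> : T * (n%:R * ln y0 + (K + S0)) + (1 - T) * (n%:R * ln y1 + (K + S1))
       = n%:R * (T * ln y0 + (1 - T) * ln y1) + (K + (T * S0 + (1 - T) * S1)) by ring.
    by apply: lerD => //; rewrite lerD2l.
  have -> : T * (- c * (n%:R * ln y0 + (K + S0))) + (1 - T) * (- c * (n%:R * ln y1 + (K + S1)))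
     = - (c * (T * (n%:R * ln y0 + (K + S0)) + (1 - T) * (n%:R * ln y1 + (K + S1)))) by ring.
  by rewrite mulNr lerN2 ler_pM2l.
move=> z hz.
have z0 := spos z hz.
have zz := sqrtsq z z hz hz.
have pz := ppos _ zz.
pose q1 : {poly R} := z ^+ n *: (p \Po ('X * z%:P)).
pose q2 : {poly R} := 'X^n * (p \Po (z%:P * 'X)).
have q1E : forall x, q1.[x] = z ^+ n * p.[x * z].
  by move=> x; rewrite /q1 hornerZ horner_comp !hornerE.
have q2E : forall y, q2.[y] = y ^+ n * p.[z * y].
  by move=> y; rewrite /q2 hornerM horner_comp !hornerE.
have q1z : 0 < q1.[z] by rewrite q1E mulr_gt0 // exprn_gt0.
have q2z : 0 < q2.[z] by rewrite q2E mulr_gt0 // exprn_gt0.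
have F1 : (fun x => Ffun m d p x z) = (fun x => - c * ln q1.[x]).
  by apply/funext => x; rewrite /Ffun q1E -/c -/n.
have F2 : (fun y => Ffun m d p z y) = (fun y => - c * ln q2.[y]).
  by apply/funext => y; rewrite /Ffun q2E -/c -/n.
exists (- c * (q1^`().[z] / q1.[z])), (- c * (q2^`().[z] / q2.[z])).
split; first by rewrite F1; exact: der_lnpoly.
split; first by rewrite F2; exact: der_lnpoly.
have d1E : q1^`().[z] = z ^+ n * ((p^`()).[z * z] * z).
  rewrite /q1 derivZ deriv_comp hornerZ hornerM horner_comp.
  by rewrite derivM derivX derivC !hornerE.
have d2E : q2^`().[z] = (z ^+ n.-1 *+ n) * p.[z * z] + z ^+ n * ((p^`()).[z * z] * z).
  rewrite /q2 derivM derivXn deriv_comp hornerD !hornerM horner_comp.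
  rewrite derivM derivX derivC !hornerE /= hornerMn hornerXn horner_comp !hornerE.
  by [].
rewrite d1E d2E !q1E q2E /Hfun /Gfun /= expr2.
have cc : c * c = (m%:R * d%:R)^-1.
  by rewrite /c -invfM -expr2 sqr_sqrtr ?natrM.
have mE : m%:R = d%:R + n%:R :> R by rewrite -natrD /n subnKC.
have dn0 : d%:R != 0 :> R by rewrite pnatr_eq0 eqn0Ngt d1.
have zn0 : z != 0 by rewrite gt_eqF.
have pn0 : p.[z * z] != 0 by rewrite gt_eqF.
have md0 : m%:R * d%:R != 0 :> R.
  by rewrite mulf_neq0 // pnatr_eq0 eqn0Ngt (leq_trans d1 dm).
set P := p.[z * z]; set P' := p^`().[z * z].
have -> : forall A B : R, - c * A * (- c * B) = (c * c) * (A * B) by move=> A B; ring.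
rewrite cc.
have mn0 : m%:R != 0 :> R by apply: contraNneq md0 => ->; rewrite mul0r.
have dpos : (0:R) < d%:R by rewrite ltr0n.
rewrite mE in mn0 md0 *.
clearbody n c.
have [En|[k En]] : n = 0%N \/ exists k, n = k.+1 by case: (n) => [|k]; [left|right; exists k].
  subst n; rewrite mulr0n /= ?expr0 ?mul1r ?add0r ?addr0 in mn0 md0 *.
  field; rewrite ?dn0 ?zn0 ?pn0 //.
subst n; rewrite /= exprS -mulr_natl.
have zk : z ^+ k != 0 by rewrite expf_neq0.
have kpos : (0:R) <= k%:R by rewrite ler0n.
field; rewrite ?dn0 ?zn0 ?pn0 ?zk //=.
by rewrite andbT gt_eqF //; lra.
Qed.
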